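(* Let $S_n$ ($n\ge3$) act on $V=\mathbb{C}^n$ by permutations, fix $a,b,c\in\mathbb{C}$, let $*\in\{L,C\}$, and let $x,y$ be $3$-cycles with $xy=g$. Let $\phi^*_{x,y}$ be the corresponding summand of the $g$-component of $\phi(\kappa^*_{\mathrm{tri}},\kappa^L_{\mathrm{tri}})$. For $1\leq i,j,k\leq n$: (1) if $e_i,e_j\in V^y$, then $\phi^*_{x,y}(e_i,e_j,e_k)=0$; (2) if $e_i\in V^y\cap V^x$, then $\phi^*_{x,y}(e_i,e_j,e_k)=0$; (3) if $e_i\in V^y\setminus V^x$ and $e_j\notin V^y$, then $\phi^*_{x,y}(e_i,e_j,ye_j)=2(b-a)\big[\delta_y(xe_i)-\delta_y(x^{-1}e_i)\big]\kappa^*_x(e_i,xe_i)$; (4) if $e_i\notin V^y$, then $\phi^*_{x,y}(e_i,ye_i,y^2e_i)=0$.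
   Context: $S_n$ acts by $\sigma e_i=e_{\sigma(i)}$; $V^g$ is the fixed space of $g$; $\delta_y(v)=1$ if $v\in V^y$ and $0$ otherwise. $\kappa^L_{\mathrm{tri}}=\sum\kappa^L_{(ijk)}(ijk)$ is the linear 2-cochain supported on 3-cycles with $\kappa^L_{(ijk)}(e_i,e_j)=\kappa^L_{(ijk)}(e_j,e_k)=\kappa^L_{(ijk)}(e_k,e_i)=a(e_i+e_j+e_k)+b\sum_{l\notin\{i,j,k\}}e_l$ and $\kappa^L_{(ijk)}(e_l,e_m)=0$ whenever $e_l$ or $e_m$ lies in $V^{(ijk)}$; $\kappa^C_{\mathrm{tri}}$ is the constant 2-cochain supported on 3-cycles with $\kappa^C_{(ijk)}(e_i,e_j)=\kappa^C_{(ijk)}(e_j,e_k)=\kappa^C_{(ijk)}(e_k,e_i)=c$ and $\kappa^C_{(ijk)}(e_l,e_m)=0$ whenever $e_l$ or $e_m$ lies in $V^{(ijk)}$. For $\alpha$ linear or constant and $\beta$ linear, $\phi(\alpha,\beta)_g=\sum_{xy=g}\phi_{x,y}$ with $\phi_{x,y}(v_1,v_2,v_3)=\alpha_x(v_1+yv_1,\beta_y(v_2,v_3))+\alpha_x(v_2+yv_2,\beta_y(v_3,v_1))+\alpha_x(v_3+yv_3,\beta_y(v_1,v_2))$; here $\phi^*_{x,y}$ is this with $\alpha=\kappa^*_{\mathrm{tri}}$, $\beta=\kappa^L_{\mathrm{tri}}$. *)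

(* Defs.v *)
(* V = C^n is modelled as row vectors 'rV[C]_n, with
   C = R[i] the complex numbers over a real type R (mathcomp-real-closed). *)
From HB Require Import structures.
From mathcomp Require Import all_boot all_order all_algebra all_fingroup.
From mathcomp Require Import complex reals.

Set Implicit Arguments.
Unset Strict Implicit.
Unset Printing Implicit Defensive.

Import GRing.Theory Num.Theory.
Local Open Scope ring_scope.

Section Defs.
Variables (K : fieldType) (n : nat).

Definition evec (i : 'I_n) : 'rV[K]_n := delta_mx 0 i.

(* permutation action  sigma e_i = e_{sigma i} *)
Definition act (s : 'S_n) (v : 'rV[K]_n) : 'rV[K]_n :=
  \row_j v 0 ((s^-1)%g j).

Definition in_fixed (s : 'S_n) (v : 'rV[K]_n) : bool := act s v == v.

Definition deltaF (s : 'S_n) (v : 'rV[K]_n) : K :=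
  if in_fixed s v then 1 else 0.

Definition is_3cycle (s : 'S_n) : bool :=
  [exists i, exists j, exists k,
     [&& i != j, j != k, i != k, s i == j, s j == k, s k == i &
        [forall l, (l \notin [:: i; j; k]) ==> (s l == l)]]].

(* coefficient of the alternating form on the basis pair (e_p, e_q):
   1 if p, q are moved and q = g p  (pairs (e_i,e_j),(e_j,e_k),(e_k,e_i)),
  -1 if p, q are moved and p = g q  (the transposed pairs),
   0 otherwise (in particular if e_p or e_q lies in V^g). *)
Definition kcoef (g : 'S_n) (p q : 'I_n) : K :=
  if (g p != p) && (g q != q) then
    (if q == g p then 1 else if p == g q then -1 else 0)
  else 0.

(* a(e_i+e_j+e_k) + b * sum_{l not in {i,j,k}} e_l  for g = (i j k) *)
Definition valL (a b : K) (g : 'S_n) : 'rV[K]_n :=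
  \row_l (if g l != l then a else b).

Definition kappaL (a b : K) (g : 'S_n) (u v : 'rV[K]_n) : 'rV[K]_n :=
  if is_3cycle g then
    \sum_(p < n) \sum_(q < n) (u 0 p * v 0 q * kcoef g p q) *: valL a b g
  else 0.

Definition kappaC (c : K) (g : 'S_n) (u v : 'rV[K]_n) : K^o :=
  if is_3cycle g then
    \sum_(p < n) \sum_(q < n) u 0 p * v 0 q * kcoef g p q * c
  else 0.

Definition phi_xy (W : lmodType K)
    (alpha : 'S_n -> 'rV[K]_n -> 'rV[K]_n -> W)
    (beta : 'S_n -> 'rV[K]_n -> 'rV[K]_n -> 'rV[K]_n)
    (x y : 'S_n) (v1 v2 v3 : 'rV[K]_n) : W :=
  alpha x (v1 + act y v1) (beta y v2 v3)
  + alpha x (v2 + act y v2) (beta y v3 v1)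
  + alpha x (v3 + act y v3) (beta y v1 v2).

Definition lemma7p1_claims (W : lmodType K)
    (kstar : 'S_n -> 'rV[K]_n -> 'rV[K]_n -> W) (a b : K) (x y : 'S_n) : Prop :=
  let phi := phi_xy kstar (kappaL a b) x y in
  [/\ (forall i j k : 'I_n, in_fixed y (evec i) -> in_fixed y (evec j) ->
         phi (evec i) (evec j) (evec k) = 0),
      (forall i j k : 'I_n, in_fixed y (evec i) -> in_fixed x (evec i) ->
         phi (evec i) (evec j) (evec k) = 0),
      (forall i j : 'I_n, in_fixed y (evec i) -> ~~ in_fixed x (evec i) ->
         ~~ in_fixed y (evec j) ->
         phi (evec i) (evec j) (act y (evec j))
         = (2 * (b - a) * (deltaF y (act x (evec i))
                           - deltaF y (act (x^-1)%g (evec i))))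
             *: kstar x (evec i) (act x (evec i)))
    & (forall i : 'I_n, ~~ in_fixed y (evec i) ->
         phi (evec i) (act y (evec i)) (act (y ^+ 2)%g (evec i)) = 0)].

End Defs.

(* Main.v *)
Require Import Defs.
From HB Require Import structures.
From mathcomp Require Import all_boot all_order all_algebra all_fingroup.
From mathcomp Require Import complex reals ring.
Import GRing.Theory Num.Theory.
Local Open Scope ring_scope.
Set Implicit Arguments. Unset Strict Implicit.

Section Gen.
Variables (K : fieldType) (n : nat).
Local Notation kc := (@kcoef K n).
Local Notation ev := (@evec K n).
Local Notation actv := (@Defs.act K n).
Implicit Types (g : 'S_n) (p q : 'I_n).

Lemma cyc_moved g p : is_3cycle g -> g p != p ->
  [/\ g (g (g p)) = p, g (g p) != p, g (g p) != g p &
      forall q, (g q != q) = [|| q == p, q == g p | q == g (g p)]].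
Proof.
case/existsP=> i /existsP[j /existsP[k /and4P[ij jk ik /and4P[/eqP gi /eqP gj /eqP gk /forallP Hl]]]].
have Hm : forall l, (g l != l) = (l \in [:: i; j; k]).
  move=> l; apply/idP/idP.
    by move=> H; apply: contraNT H => /(implyP (Hl l)).
  rewrite !inE => /or3P[] /eqP ->.
  - by rewrite gi eq_sym.
  - by rewrite gj eq_sym.
  - by rewrite gk.
rewrite Hm !inE => /or3P[] /eqP ->.
- rewrite gi gj gk; split=> //; try by rewrite eq_sym.
  by move=> q; rewrite Hm !inE.
- rewrite gj gk gi; split=> //; try by rewrite eq_sym.
  by move=> q; rewrite Hm !inE; case: (q == i); case: (q == j); case: (q == k).
- rewrite gk gi gj; split=> //; try by rewrite eq_sym.
  by move=> q; rewrite Hm !inE; case: (q == i); case: (q == j); case: (q == k).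
Qed.

Lemma kcoef0l g p q : g p = p -> kc g p q = 0 :> K.
Proof. by move=> H; rewrite /kc /kcoef H eqxx. Qed.
Lemma kcoef0r g p q : g q = q -> kc g p q = 0 :> K.
Proof. by move=> H; rewrite /kc /kcoef H eqxx andbF. Qed.

Lemma kcoefE g p q : is_3cycle g -> g p != p ->
  kc g p q = (q == g p)%:R - (q == g (g p))%:R :> K.
Proof.
move=> c3 mp; have [g3 g2p g2g Hm] := cyc_moved c3 mp.
rewrite /kc /kcoef mp /=.
have [->|nq1] := eqVneq q (g p).
  by rewrite (eq_sym (g p)) (negbTE g2g) subr0.
have [->|nq2] := eqVneq q (g (g p)).
  by rewrite g3 (eq_sym p) g2p eqxx sub0r.
rewrite subrr.
case: ifP => // Hq; case: ifP => // /eqP pq.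
move: Hq; rewrite Hm (negbTE nq1) (negbTE nq2) !orbF => /eqP qp.
by move: mp; rewrite qp in pq; rewrite -pq eqxx.
Qed.

Lemma kcoefN g p q : is_3cycle g -> kc g p q = - kc g q p :> K.
Proof.
move=> c3.
have [fp|mp] := eqVneq (g p) p; first by rewrite [kc g p q]kcoef0l // [kc g q p]kcoef0r // oppr0.
have [fq|mq] := eqVneq (g q) q; first by rewrite [kc g p q]kcoef0r // [kc g q p]kcoef0l // oppr0.
have [g3 g2p g2g Hm] := cyc_moved c3 mp.
rewrite !kcoefE //.
have e1 : (p == g p) = false by rewrite eq_sym (negbTE mp).
have e2 : (p == g (g p)) = false by rewrite eq_sym (negbTE g2p).
have e3 : (g p == g (g p)) = false by rewrite eq_sym (negbTE g2g).
have e4 : (g (g p) == g p) = false by exact: negbTE g2g.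
move: mq; rewrite Hm => /or3P[] /eqP ->.
- by rewrite e1 e2; ring.
- by rewrite eqxx e3 e2 g3 eqxx; ring.
- by rewrite e4 eqxx g3 eqxx e1; ring.
Qed.

Lemma sum_delta (f : 'I_n -> K) p : \sum_q (q == p)%:R * f q = f p.
Proof.
rewrite (bigD1 p) //= eqxx mul1r big1 ?addr0 // => q /negbTE ->.
by rewrite mul0r.
Qed.

Lemma sum_delta1 p : \sum_q (q == p)%:R = 1 :> K.
Proof. by rewrite (bigD1 p) //= eqxx big1 ?addr0 // => q /negbTE ->. Qed.

Lemma rowsum g p : is_3cycle g -> \sum_q kc g p q = 0 :> K.
Proof.
move=> c3; have [fp|mp] := eqVneq (g p) p.
  by rewrite big1 // => q _; rewrite kcoef0l.
under eq_bigr do rewrite kcoefE //.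
by rewrite sumrB !sum_delta1 subrr.
Qed.

Definition Om g (u v : 'rV[K]_n) : K := \sum_p \sum_q u 0 p * v 0 q * kc g p q.

Lemma evecE i p : ev i 0 p = (p == i)%:R.
Proof. by rewrite /evec mxE eqxx. Qed.

Lemma actE (s : 'S_n) i : actv s (ev i) = ev (s i).
Proof.
apply/matrixP => r c; rewrite !mxE !eqxx /=.
rewrite (ord1 r) eqxx /=.
suff -> : (s^-1%g c == i) = (c == s i) by [].
by apply/eqP/eqP => [<-|->]; rewrite ?permKV ?permK.
Qed.

Lemma in_fixedE (s : 'S_n) i : in_fixed s (ev i) = (s i == i).
Proof.
rewrite /in_fixed actE; apply/eqP/eqP => [H|->] //.
move: (congr1 (fun M : 'rV[K]_n => M 0 (s i)) H); rewrite !evecE eqxx.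
by case: eqP => // _ /eqP; rewrite oner_eq0.
Qed.

Lemma Om_e1 g i v : Om g (ev i) v = \sum_q v 0 q * kc g i q.
Proof.
rewrite /Om (bigD1 i) //= [X in _ + X]big1 ?addr0.
  by apply: eq_bigr => q _; rewrite evecE eqxx mul1r.
by move=> p /negbTE pi; apply: big1 => q _; rewrite evecE pi !mul0r.
Qed.

Lemma Om_ee g i j : Om g (ev i) (ev j) = kc g i j.
Proof.
rewrite Om_e1 (bigD1 j) //= big1 ?addr0 ?evecE ?eqxx ?mul1r //.
by move=> q /negbTE qj; rewrite evecE qj mul0r.
Qed.

Lemma OmD1 g u1 u2 v : Om g (u1 + u2) v = Om g u1 v + Om g u2 v.
Proof.
rewrite /Om -big_split; apply: eq_bigr => p _; rewrite -big_split.
by apply: eq_bigr => q _; rewrite mxE !mulrDl.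
Qed.

Lemma OmZ2 g u v s : Om g u (s *: v) = s * Om g u v.
Proof.
rewrite /Om mulr_sumr; apply: eq_bigr => p _; rewrite mulr_sumr.
by apply: eq_bigr => q _; rewrite mxE; ring.
Qed.

Lemma kappaL_Om a b g u v : is_3cycle g ->
  kappaL a b g u v = Om g u v *: valL a b g.
Proof.
move=> c3; rewrite /kappaL c3 /Om scaler_suml; apply: eq_bigr => p _.
by rewrite scaler_suml.
Qed.

Lemma kappaC_Om c g u v : is_3cycle g ->
  kappaC c g u v = Om g u v *: (c : K^o).
Proof.
move=> c3; rewrite /kappaC c3 /Om.
rewrite [X in _ = X]/GRing.scale /= mulr_suml; apply: eq_bigr => p _.
by rewrite mulr_suml.
Qed.


Lemma sum_deltar (f : 'I_n -> K) p : \sum_q f q * (q == p)%:R = f p.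
Proof. by under eq_bigr do rewrite mulrC; rewrite sum_delta. Qed.

Lemma kdiag g p : is_3cycle g -> kc g p p = 0.
Proof.
move=> c3; have [fp|mp] := eqVneq (g p) p; first by rewrite kcoef0l.
have [g3 g2p g2g Hm] := cyc_moved c3 mp.
by rewrite kcoefE // eq_sym (negbTE mp) eq_sym (negbTE g2p) subrr.
Qed.

End Gen.

Section Main.
Variables (K : fieldType) (n : nat) (W : lmodType K).
Variables (kstar : 'S_n -> 'rV[K]_n -> 'rV[K]_n -> W) (F : W) (a b : K) (x y : 'S_n).
Hypotheses (cx : is_3cycle x) (cy : is_3cycle y)
  (Hk : forall u v, kstar x u v = Om x u v *: F).
Local Notation kc := (@kcoef K n).
Local Notation ev := (@evec K n).
Local Notation actv := (@Defs.act K n).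
Local Notation V := (valL a b y).

Lemma phiE u v w : phi_xy kstar (kappaL a b) x y u v w =
  (Om y v w * Om x (u + actv y u) V + Om y w u * Om x (v + actv y v) V
   + Om y u v * Om x (w + actv y w) V) *: F.
Proof. by rewrite /phi_xy !kappaL_Om // !Hk !OmZ2 !scalerDl. Qed.

Lemma claims : lemma7p1_claims kstar a b x y.
Proof.
split.
- move=> i j k; rewrite !in_fixedE => /eqP fi /eqP fj.
  rewrite phiE !Om_ee [kc y j k]kcoef0l // [kc y k i]kcoef0r // [kc y i j]kcoef0l //.
  by rewrite !mul0r !addr0 scale0r.
- move=> i j k; rewrite !in_fixedE => /eqP fyi /eqP fxi.
  have r0 : Om x (ev i) V = 0.
    by rewrite Om_e1 big1 // => q _; rewrite kcoef0l // mulr0.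
  rewrite phiE !Om_ee [kc y k i]kcoef0r // [kc y i j]kcoef0l // actE fyi OmD1 r0.
  by rewrite !(mulr0, mul0r, addr0) scale0r.
- move=> i j; rewrite !in_fixedE => /eqP fyi mxi mj.
  have [g3 g2p g2g Hm] := cyc_moved cx mxi.
  have [h3 h2p h2g Hmy] := cyc_moved cy mj.
  rewrite phiE !actE fyi !Hk !Om_ee [kc y (y j) i]kcoef0r // [kc y i j]kcoef0l //.
  rewrite (kcoefE K _ cy mj) (kcoefE K _ cx mxi) !eqxx (eq_sym (y j)) (negbTE h2g).
  rewrite (eq_sym (x i)) (negbTE g2g).
  have -> : (x^-1)%g i = x (x i) by rewrite -{1}g3 permK.
  rewrite /deltaF !in_fixedE OmD1 Om_e1.
  under eq_bigr do rewrite kcoefE // mulrBr.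
  rewrite sumrB !sum_deltar !mxE.
  rewrite scalerA; congr (_ *: _).
  by case: (y (x i) == x i); case: (y (x (x i)) == x (x i)) => /=; ring.
- move=> i; rewrite in_fixedE => mi.
  have [g3 g2p g2g Hm] := cyc_moved cy mi.
  rewrite phiE !actE expgS expg1 permM g3 !Om_ee.
  have myi : y (y i) != y i by [].
  have myyi : y (y (y i)) != y (y i) by rewrite g3 eq_sym.
  rewrite (kcoefE K _ cy mi) (kcoefE K _ cy myi) (kcoefE K _ cy myyi).
  rewrite g3 !eqxx.
  have d1 : (i == y i) = false by rewrite eq_sym (negbTE mi).
  have d2 : (i == y (y i)) = false by rewrite eq_sym (negbTE g2p).
  have d3 : (y i == y (y i)) = false by rewrite eq_sym (negbTE g2g).
  have d4 : (y i == i) = false by rewrite (negbTE mi).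
  have d5 : (y (y i) == i) = false by rewrite (negbTE g2p).
  have d6 : (y (y i) == y i) = false by rewrite (negbTE g2g).
  rewrite d5 d1 d3.
  have Vq : forall q, V 0 q = b + (a - b) * ((q == i)%:R + (q == y i)%:R + (q == y (y i))%:R).
    move=> q; rewrite mxE Hm.
    have [->|qi] := eqVneq q i; first by rewrite d1 d2 /=; ring.
    have [->|qyi] := eqVneq q (y i); first by rewrite ?d3 /=; ring.
    by case: (q == y (y i)) => /=; ring.
  have rE : forall p, Om x (ev p) V = (a - b) * (kc x p i + kc x p (y i) + kc x p (y (y i))).
    move=> p; rewrite Om_e1.
    have H : forall q, V 0 q * kc x p q = b * kc x p q + ((a - b) * ((q == i)%:R * kc x p q)
       + ((a - b) * ((q == y i)%:R * kc x p q) + (a - b) * ((q == y (y i))%:R * kc x p q))).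
      by move=> q; rewrite Vq; ring.
    rewrite (eq_bigr _ (fun q _ => H q)) !big_split /= -!mulr_sumr !sum_delta rowsum //.
    ring.
  rewrite !OmD1 !rE !kdiag // (kcoefN K (y i) i cx) (kcoefN K (y (y i)) i cx).
  rewrite (kcoefN K (y (y i)) (y i) cx).
  have -> : forall s : K, s *: F = 0 *: F -> s *: F = 0 by move=> s ->; rewrite scale0r.
    by [].
  congr (_ *: _); ring.
Qed.
End Main.

Theorem lemma7p1 (R : realType) (n : nat) (a b c : R[i]) (x y : 'S_n) :
  (3 <= n)%N -> is_3cycle x -> is_3cycle y ->
  lemma7p1_claims (kappaL a b) a b x y /\ lemma7p1_claims (kappaC c) a b x y.
Proof.
move=> _ cx cy; split.
  by apply: (claims (F := valL a b x)) => // u v; rewrite kappaL_Om.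
by apply: (claims (F := (c : (R[i])^o))) => // u v; rewrite kappaC_Om.
Qed.
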